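(* Let $f=1-xy$, $g=1-xy^2$, $h=1-y$ in $\mathbb{Z}[x,y]$. There exist polynomials $\xi_m\in\mathbb{Z}[x,y]$ for all integers $m\geq1$ such that (1) (a) $\xi_1=g$; (b) $\xi_{m+1}=f\xi_m+x^mh^{m+1}$; (c) $\xi_{m+1}=xh\xi_m+f^{m+1}$; (2) $\xi_m$ vanishes to order $m$ at $t_0=(1,1)$; (3) the Newton polygon of $\xi_m$ is the triangle with vertices $(0,0)$, $(m-1,0)$, $(m,m+1)$; (4) $\xi_m$ is irreducible in $K[x,y]$ for every field $K$.
   Context: The Newton polygon of a polynomial is the convex hull of the exponent vectors of the monomials appearing with nonzero coefficient. *)

(* Defs.v *)
(* bivariate polynomials via multinomials' {mpoly R[2]}.
   Variable 'X_0 is x, variable 'X_1 is y; a monomial m : 'X_{1..2}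
   has exponent vector (m 0, m 1). *)
From HB Require Import structures.
From mathcomp Require Import all_boot all_order all_algebra.
From mathcomp Require Export mpoly.
Set Implicit Arguments. Unset Strict Implicit. Unset Printing Implicit Defensive.
Import Order.TTheory GRing.Theory Num.Theory.
Local Open Scope ring_scope.

Definition i0 : 'I_2 := @Ordinal 2 0 isT.
Definition i1 : 'I_2 := @Ordinal 2 1 isT.

Definition xvar {R : nzRingType} : {mpoly R[2]} := 'X_i0.
Definition yvar {R : nzRingType} : {mpoly R[2]} := 'X_i1.

Definition expvec (m : 'X_{1..2}) : rat * rat := ((m i0)%:R, (m i1)%:R).

Definition in_conv (S : seq (rat * rat)) (p : rat * rat) : Prop :=
  exists lam : 'I_(size S) -> rat,
    (forall i, 0 <= lam i) /\ \sum_i lam i = 1 /\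
    p.1 = \sum_i lam i * (nth (0,0) S i).1 /\
    p.2 = \sum_i lam i * (nth (0,0) S i).2.

Definition newton_polygon {R : nzRingType} (p : {mpoly R[2]}) : rat * rat -> Prop :=
  in_conv [seq expvec m | m <- msupp p].

Definition shift_at {R : comNzRingType} (a b : R) (p : {mpoly R[2]}) : {mpoly R[2]} :=
  p \mPo [tuple 'X_i0 + a%:MP; 'X_i1 + b%:MP].

Definition vanishes_to_order {R : comNzRingType} (p : {mpoly R[2]}) (a b : R) (k : nat) : Prop :=
  (forall m, m \in msupp (shift_at a b p) -> (k <= mdeg m)%N) /\
  (exists2 m, m \in msupp (shift_at a b p) & mdeg m = k).

Definition irreducible_elt {R : idomainType} (p : R) : Prop :=
  p != 0 /\ p \isn't a GRing.unit /\
  forall a b : R, p = a * b -> a \is a GRing.unit \/ b \is a GRing.unit.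

Definition to_field (K : fieldType) (p : {mpoly int[2]}) : {mpoly K[2]} :=
  map_mpoly (fun z : int => z%:~R) p.

(* Main.v *)
Require Import Defs.
From HB Require Import structures.
From mathcomp Require Import all_boot all_order all_algebra.
From mathcomp Require Import mpoly.
From mathcomp Require Import ring lra zify.
Import Order.TTheory GRing.Theory Num.Theory.
Local Open Scope ring_scope.


Section Supp.
Context {R : nzRingType}.
Implicit Types (p q : {mpoly R[2]}) (S : 'X_{1..2} -> Prop).

Definition supp_in S p := forall mm, mm \in msupp p -> S mm.

Lemma supp_in0 S : supp_in S 0.
Proof. by move=> mm; rewrite msupp0. Qed.

Lemma supp_inD S p q : supp_in S p -> supp_in S q -> supp_in S (p + q).
Proof.
by move=> hp hq mm /msuppD_le; rewrite mem_cat => /orP[/hp|/hq].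
Qed.

Lemma supp_inN S p : supp_in S p -> supp_in S (- p).
Proof. by move=> hp mm; rewrite (perm_mem (msuppN p)) => /hp. Qed.

Lemma supp_inB S p q : supp_in S p -> supp_in S q -> supp_in S (p - q).
Proof. by move=> hp hq; apply: supp_inD => //; apply: supp_inN. Qed.

Lemma supp_inX S m : S m -> supp_in S 'X_[m].
Proof. by move=> h mm; rewrite msuppX inE => /eqP ->. Qed.

Lemma supp_in1 S : S 0%MM -> supp_in S 1.
Proof. by move=> h; rewrite -mpolyX0; apply: supp_inX. Qed.

Lemma supp_inM S1 S2 S3 p q : supp_in S1 p -> supp_in S2 q ->
  (forall a b, S1 a -> S2 b -> S3 (a + b)%MM) -> supp_in S3 (p * q).
Proof.
move=> hp hq h mm /msuppM_le /allpairsP [[a b] /= [ha hb ->]].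
exact: h (hp _ ha) (hq _ hb).
Qed.

Lemma supp_inW S S' p : (forall m, S m -> S' m) -> supp_in S p -> supp_in S' p.
Proof. by move=> h hp mm /hp /h. Qed.

Lemma supp_in_coef S p mm : supp_in S p -> ~ S mm -> p@_mm = 0.
Proof.
move=> hp nS; apply/eqP; rewrite mcoeff_eq0; apply/negP => /hp; exact: nS.
Qed.

Lemma supp_in_exp (S : nat -> 'X_{1..2} -> Prop) T p k :
  supp_in T p -> S 0%N 0%MM -> (forall j a b, T a -> S j b -> S j.+1 (a + b)%MM) ->
  supp_in (S k) (p ^+ k).
Proof.
move=> hp h0 hS; elim: k => [|k IH]; first by rewrite expr0; apply: supp_in1.
rewrite exprS; apply: (@supp_inM _ _ (S k.+1) _ _ hp IH) => a b; exact: hS.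
Qed.

End Supp.
Arguments supp_inD {R S p q}.
Arguments supp_inN {R S p}.
Arguments supp_inB {R S p q}.
Arguments supp_inM {R S1 S2 S3 p q}.
Arguments supp_inW {R S S' p}.
Arguments supp_in_coef {R S p mm}.
Arguments supp_in_exp {R S T p k}.

Definition lin (c0 c1 : int) (mm : 'X_{1..2}) : int :=
  c0 * (mm i0)%:Z + c1 * (mm i1)%:Z.

Lemma lin_add c0 c1 a b : lin c0 c1 (a + b)%MM = lin c0 c1 a + lin c0 c1 b.
Proof. rewrite /lin !mnmDE !PoszD; ring. Qed.

Definition wmax {R : nzRingType} (w : 'X_{1..2} -> int) (p : {mpoly R[2]}) (c : int) :=
  (forall mm, mm \in msupp p -> w mm <= c) /\ (exists2 mm, mm \in msupp p & w mm = c).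

Lemma seq_wmax (w : 'X_{1..2} -> int) (s : seq 'X_{1..2}) : s != [::] ->
  exists c, (forall mm, mm \in s -> w mm <= c) /\ (exists2 mm, mm \in s & w mm = c).
Proof.
elim: s => [//|a s IH] _.
case: s IH => [|b s] IH.
  by exists (w a); split; [move=> mm; rewrite inE => /eqP ->|exists a; rewrite ?inE].
have [c [h1 [mm h2 h3]]] := IH isT.
case: (lerP c (w a)) => hc.
  exists (w a); split; last by exists a; rewrite ?inE ?eqxx.
  move=> x; rewrite inE => /orP[/eqP ->//|/h1 hx]; exact: le_trans hx hc.
exists c; split; last by exists mm; rewrite // inE h2 orbT.
move=> x; rewrite inE => /orP[/eqP ->|/h1 //]; exact: ltW.
Qed.

Lemma wmax_exists {R : nzRingType} w (p : {mpoly R[2]}) : p != 0 -> exists c, wmax w p c.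
Proof. by rewrite -msupp_eq0 => /(seq_wmax w). Qed.

Lemma wmax_uniq {R : nzRingType} w (p : {mpoly R[2]}) c c' : wmax w p c -> wmax w p c' -> c = c'.
Proof.
move=> [h1 [m1 i1' e1]] [h2 [m2 i2' e2]].
have := h2 _ i1'; have := h1 _ i2'; rewrite e1 e2 => a b.
by apply/le_anti; rewrite a b.
Qed.

Arguments wmax_exists {R} w {p}.
Arguments wmax_uniq {R w p c c'}.

Lemma supp_inZ {R : nzRingType} S (c : R) (p : {mpoly R[2]}) : supp_in S p -> supp_in S (c *: p).
Proof. by move=> hp mm /msuppZ_le /hp. Qed.

Lemma supp_in_sum {R : nzRingType} S (I : Type) (r : seq I) (P : pred I) (F : I -> {mpoly R[2]}) :
  (forall i, P i -> supp_in S (F i)) -> supp_in S (\sum_(i <- r | P i) F i).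
Proof.
move=> h; apply: (big_ind (supp_in S)); [exact: supp_in0| |exact: h].
by move=> x y; apply: supp_inD.
Qed.

Section WmaxM.
Context {R : idomainType} (w : 'X_{1..2} -> int)
  (hw : forall a b, w (a + b)%MM = w a + w b).

Definition in_part (p : {mpoly R[2]}) a := \sum_(mm <- msupp p | w mm == a) p@_mm *: 'X_[mm].
Definition rest_part (p : {mpoly R[2]}) a := \sum_(mm <- msupp p | w mm != a) p@_mm *: 'X_[mm].

Lemma split_part p a : p = in_part p a + rest_part p a.
Proof. by rewrite {1}[p]mpolyE (bigID (fun mm => w mm == a)). Qed.

Lemma in_part_supp p a : supp_in (fun mm => w mm = a) (in_part p a).
Proof.
apply: supp_in_sum => mm /eqP h; apply: supp_inZ; exact: supp_inX.
Qed.

Lemma rest_part_supp p a : (forall mm, mm \in msupp p -> w mm <= a) ->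
  supp_in (fun mm => w mm < a) (rest_part p a).
Proof.
move=> hp; rewrite /rest_part big_seq_cond; apply: supp_in_sum => mm /andP[h1 h2].
apply: supp_inZ; apply: supp_inX; by rewrite lt_neqAle h2 hp.
Qed.

Arguments rest_part_supp {p a}.

Lemma in_part_neq0 (p : {mpoly R[2]}) a : wmax w p a -> in_part p a != 0.
Proof.
move=> [h1 [m0 hm0 e0]]; apply/negP => /eqP h0.
have := split_part p a; rewrite h0 add0r => e.
have : p@_m0 = 0.
  rewrite {1}e; apply: (supp_in_coef (rest_part_supp h1)); by rewrite /= e0 ltxx.
by move/eqP; rewrite mcoeff_eq0 hm0.
Qed.

Lemma wmaxM (p q : {mpoly R[2]}) a b : wmax w p a -> wmax w q b -> wmax w (p * q) (a + b).
Proof.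
move=> hp hq; have [hp1 _] := hp; have [hq1 _] := hq.
split.
  move=> mm /msuppM_le /allpairsP [[m1 m2] /= [h1 h2 ->]]; rewrite hw.
  by apply: lerD; [exact: hp1|exact: hq1].
have nz : in_part p a * in_part q b != 0 by rewrite mulf_neq0 // in_part_neq0.
have hm := mlead_supp nz; set mm := mlead _ in hm.
have hwm : w mm = a + b.
  apply: (supp_inM (S3 := fun mm => w mm = a + b) (in_part_supp p a) (in_part_supp q b) _ _ hm).
  by move=> x y /= hx hy; rewrite hw hx hy.
exists mm => //.
have Hlt : ~ (fun mm => w mm < a + b) mm by rewrite /= hwm ltxx.
have e1 : (in_part p a * rest_part q b)@_mm = 0.
  apply: (supp_in_coef (S := fun mm => w mm < a + b) _ Hlt).
  apply: (supp_inM (in_part_supp p a) (rest_part_supp hq1)) => x y /= hx hy.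
  by rewrite hw hx ltrD2l.
have e2 : (rest_part p a * in_part q b)@_mm = 0.
  apply: (supp_in_coef (S := fun mm => w mm < a + b) _ Hlt).
  apply: (supp_inM (rest_part_supp hp1) (in_part_supp q b)) => x y /= hx hy.
  by rewrite hw hy ltrD2r.
have e3 : (rest_part p a * rest_part q b)@_mm = 0.
  apply: (supp_in_coef (S := fun mm => w mm < a + b) _ Hlt).
  apply: (supp_inM (rest_part_supp hp1) (rest_part_supp hq1)) => x y /= hx hy.
  by rewrite hw ltrD.
rewrite mcoeff_msupp (split_part p a) (split_part q b) mulrDl !mulrDr.
by rewrite !mcoeffD e1 e2 e3 !addr0 -mcoeff_msupp.
Qed.

End WmaxM.

Definition Pm2 (m : nat) : 'X_{1..2} := (mnm1 i0 *+ m + mnm1 i1 *+ m.+1)%MM.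

Lemma Pm2_0 m : Pm2 m i0 = m.
Proof. by rewrite /Pm2 mnmDE !mulmnE !mnm1E /= mul1n mul0n addn0. Qed.
Lemma Pm2_1 m : Pm2 m i1 = m.+1.
Proof. by rewrite /Pm2 mnmDE !mulmnE !mnm1E /= mul1n mul0n. Qed.

Lemma mnm2_eq0 (mm : 'X_{1..2}) : mm i0 = 0%N -> mm i1 = 0%N -> mm = 0%MM.
Proof.
move=> h0 h1; apply/mnmP => i; rewrite mnm0E.
case: i => [[|[|//]] hi].
  by have -> : Ordinal hi = i0 by apply: val_inj.
by have -> : Ordinal hi = i1 by apply: val_inj.
Qed.

Lemma linE c0 c1 mm : lin c0 c1 mm = c0 * (mm i0)%:Z + c1 * (mm i1)%:Z.
Proof. by []. Qed.

Lemma wmax_decomp {R : idomainType} c0 c1 (A B : {mpoly R[2]}) c :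
  A * B != 0 -> wmax (lin c0 c1) (A * B) c ->
  exists cA cB, [/\ wmax (lin c0 c1) A cA, wmax (lin c0 c1) B cB & cA + cB = c].
Proof.
move=> nz hP.
have nA : A != 0 by apply: contraNneq nz => ->; rewrite mul0r.
have nB : B != 0 by apply: contraNneq nz => ->; rewrite mulr0.
have [cA hA] := wmax_exists (lin c0 c1) nA.
have [cB hB] := wmax_exists (lin c0 c1) nB.
exists cA, cB; split => //.
apply/esym; apply: (wmax_uniq hP); apply: wmaxM => //; exact: lin_add.
Qed.

Lemma wmax_intro {R : nzRingType} w (p : {mpoly R[2]}) c mm :
  (forall mm, mm \in msupp p -> w mm <= c) -> mm \in msupp p -> w mm = c -> wmax w p c.
Proof. by move=> h1 h2 h3; split => //; exists mm. Qed.

Arguments wmax_decomp {R c0 c1 A B c}.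
Arguments wmax_intro {R w p c mm}.

Definition Tcond (m : nat) (mm : 'X_{1..2}) :=
  (mm i0 <= m)%N /\ (m * mm i1 <= m.+1 * mm i0)%N.

Section Irr.
Context (K : fieldType).

Lemma zero_in {m} {P A B : {mpoly K[2]}} : supp_in (Tcond m) P ->
  0%MM \in msupp P -> P = A * B -> 0%MM \in msupp A.
Proof.
move=> hS h0 eP.
have nz : A * B != 0 by rewrite -eP; apply: contraTneq h0 => ->; rewrite msupp0.
have hP : wmax (lin (-1) (-1)) (A * B) 0.
  rewrite -eP; apply: (wmax_intro _ h0); last by rewrite linE !mnm0E; lia.
  by move=> mm _; rewrite linE; lia.
have [cA [cB [[hA1 [mA iA eA]] [hB1 [mB iB eB]] e]]] := wmax_decomp nz hP.
have : cA = 0.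
  have : cA <= 0 by rewrite -eA linE; lia.
  have : cB <= 0 by rewrite -eB linE; lia.
  lia.
move=> cA0; move: eA; rewrite cA0 linE => eA.
have -> : 0%MM = mA by apply/esym/mnm2_eq0; lia.
exact: iA.
Qed.

Lemma vpos {m} {P A B : {mpoly K[2]}} : supp_in (Tcond m) P ->
  0%MM \in msupp P -> P = A * B ->
  forall mm, mm \in msupp A -> (m * mm i1 <= m.+1 * mm i0)%N.
Proof.
move=> hS h0 eP.
have nz : A * B != 0 by rewrite -eP; apply: contraTneq h0 => ->; rewrite msupp0.
have zA := zero_in hS h0 eP.
have zB : 0%MM \in msupp B by apply: (zero_in hS h0); rewrite eP mulrC.
have hP : wmax (lin (- m.+1%:Z) m%:Z) (A * B) 0.
  rewrite -eP; apply: (wmax_intro _ h0); last by rewrite linE !mnm0E; lia.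
  by move=> mm /hS [h1 h2]; rewrite linE; lia.
have [cA [cB [[hA1 _] [hB1 _] e]]] := wmax_decomp nz hP.
have := hA1 _ zA; have := hB1 _ zB; rewrite !linE !mnm0E => a b.
have cA0 : cA = 0 by lia.
move=> mm /hA1; rewrite cA0 linE; lia.
Qed.

Lemma half {m} {P A B : {mpoly K[2]}} : (1 <= m)%N -> supp_in (Tcond m) P ->
  0%MM \in msupp P -> Pm2 m \in msupp P -> P = A * B ->
  (exists2 mm, mm \in msupp B & mm i1 = (mm i0).+1) ->
  (forall mm, mm \in msupp A -> (mm i1 <= mm i0)%N) -> A \is a GRing.unit.
Proof.
move=> hm hS h0 h2 eP [mB iB eB] hA.
have eP' : P = B * A by rewrite mulrC.
have vB := vpos hS h0 eP' _ iB.
have mB0 : (m <= mB i0)%N by move: vB; rewrite eB; nia.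
have nz : A * B != 0 by rewrite -eP; apply: contraTneq h0 => ->; rewrite msupp0.
have hP : wmax (lin 1 0) (A * B) m%:Z.
  rewrite -eP; apply: (wmax_intro _ h2); last by rewrite linE Pm2_0; lia.
  by move=> mm /hS [h1' h2']; rewrite linE; lia.
have [cA [cB [[hA1 _] [hB1 _] e]]] := wmax_decomp nz hP.
have zA := zero_in hS h0 eP.
have := hA1 _ zA; have := hB1 _ iB; rewrite !linE !mnm0E => a b.
have cA0 : cA = 0 by lia.
have allz : forall k, k \in msupp A -> k = 0%MM.
  move=> k hk; have := hA1 _ hk; have := hA _ hk; rewrite cA0 linE => u v.
  apply: mnm2_eq0; lia.
have eA : A = (A@_0%MM)%:MP.
  apply/mpolyP => k; rewrite mcoeffC.
  case: (boolP (k == 0%MM)) => [/eqP ->|nk]; first by rewrite mulr1.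
  rewrite mulr0; apply/eqP; rewrite mcoeff_eq0; apply: contra nk => /allz ->.
  by [].
have c0 : A@_0%MM != 0 by rewrite -mcoeff_msupp.
rewrite eA; apply/unitrP; exists ((A@_0%MM)^-1)%:MP.
by rewrite -!mpolyCM mulVf // mulfV // mpolyC1.
Qed.

Lemma irr_main {m} {P : {mpoly K[2]}} : (1 <= m)%N -> supp_in (Tcond m) P ->
  0%MM \in msupp P -> Pm2 m \in msupp P -> irreducible_elt P.
Proof.
move=> hm hS h0 h2.
have nP : P != 0 by apply: contraTneq h0 => ->; rewrite msupp0.
split => //; split.
  apply/negP => /unitrP [Q [eQ _]].
  have nz : P * Q != 0 by rewrite mulrC eQ oner_neq0.
  have h1 : wmax (lin 1 1) (P * Q) 0.
    rewrite mulrC eQ -mpolyX0; apply: (wmax_intro (mm := 0%MM)).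
    - by move=> mm; rewrite msuppX inE => /eqP ->; rewrite linE !mnm0E.
    - by rewrite msuppX inE.
    - by rewrite linE !mnm0E.
  have [cP [cQ [[hP1 _] [_ [mQ iQ eQ']] e]]] := wmax_decomp nz h1.
  have := hP1 _ h2; rewrite linE Pm2_0 Pm2_1 => a.
  move: eQ'; rewrite linE => b.
  lia.
move=> A B eP.
have nz : A * B != 0 by rewrite -eP.
have hP : wmax (lin (-1) 1) (A * B) 1.
  rewrite -eP; apply: (wmax_intro _ h2); last by rewrite linE Pm2_0 Pm2_1; lia.
  by move=> mm /hS [h1' h2']; rewrite linE; nia.
have [cA [cB [[hA1 [mA iA eA]] [hB1 [mB iB eB]] e]]] := wmax_decomp nz hP.
have zA := zero_in hS h0 eP.
have eP' : P = B * A by rewrite mulrC.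
have zB := zero_in hS h0 eP'.
have := hA1 _ zA; have := hB1 _ zB; rewrite !linE !mnm0E => a b.
have [cB1|cA1] : cB = 1 \/ cA = 1 by lia.
  left; apply: (half hm hS h0 h2 eP).
    by exists mB => //; move: eB; rewrite linE cB1; lia.
  by move=> mm /hA1; rewrite linE; lia.
right; apply: (half hm hS h0 h2 eP').
  by exists mA => //; move: eA; rewrite linE cA1; lia.
by move=> mm /hB1; rewrite linE; lia.
Qed.

End Irr.


Definition fP : {mpoly int[2]} := 1 - xvar * yvar.
Definition hP : {mpoly int[2]} := 1 - yvar.

Fixpoint Rs (m : nat) : {mpoly int[2]} :=
  match m with
  | 0 => 0
  | k.+1 => fP * Rs k + xvar ^+ k * (hP ^+ k.+1 - (- yvar) ^+ k.+1)
  end.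

Definition xi (m : nat) : {mpoly int[2]} :=
  Rs m + (-1) ^+ m * xvar ^+ m * yvar ^+ m.+1.

Lemma Rs0 : Rs 0 = 0. Proof. by []. Qed.
Lemma RsS m : Rs m.+1 = fP * Rs m + xvar ^+ m * (hP ^+ m.+1 - (- yvar) ^+ m.+1).
Proof. by []. Qed.

Lemma xi1 : xi 1 = 1 - xvar * yvar ^+ 2.
Proof. rewrite /xi RsS Rs0 /fP /hP. ring. Qed.

Lemma g_xiS (R : comRingType) (x y r e X Y H : R) :
  (1 - x * y) * r + X * ((1 - y) * H - (-1 * e) * (y * Y)) + (-1 * e) * (x * X) * (y * (y * Y))
  = (1 - x * y) * (r + e * X * (y * Y)) + X * ((1 - y) * H).
Proof. ring. Qed.

Lemma xiS m : xi m.+1 = fP * xi m + xvar ^+ m * hP ^+ m.+1.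
Proof.
rewrite /xi RsS (exprNn yvar) !exprS /fP /hP; apply: g_xiS.
Qed.

Lemma g_base (R : comRingType) (x y : R) :
  (1 - x) * (0 + 1 * 1 * y) = (1 - x * y) - 1 * (1 - y).
Proof. ring. Qed.

Lemma g_key (R : comRingType) (x y z X F1 H1 : R) : (1 - x) * z = F1 - X * H1 ->
  (1 - x) * ((1 - x * y) * z + X * H1) = (1 - x * y) * F1 - (x * X) * ((1 - y) * H1).
Proof. move=> e; rewrite mulrDr mulrCA e; ring. Qed.

Lemma g_xiS2 (R : comRingType) (x y z X F1 H1 : R) : (1 - x) * z = F1 - X * H1 ->
  (1 - x * y) * F1 - (x * X) * ((1 - y) * H1) = (1 - x) * (x * (1 - y) * z + F1).
Proof.
move=> e.
have -> : (1 - x) * (x * (1 - y) * z + F1) = x * (1 - y) * ((1 - x) * z) + (1 - x) * F1 by ring.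
rewrite e; ring.
Qed.

Lemma key1 m : (1 - xvar) * xi m = fP ^+ m.+1 - xvar ^+ m * hP ^+ m.+1.
Proof.
elim: m => [|m IH].
  rewrite /xi Rs0 !expr0 !expr1 /fP /hP; apply: g_base.
rewrite xiS (exprS fP m.+1) (exprS xvar m) (exprS hP m.+1) /fP /hP; apply: g_key; exact: IH.
Qed.

Lemma onemx_neq0 : (1 - xvar : {mpoly int[2]}) != 0.
Proof.
apply/negP => /eqP h.
have := congr1 (mcoeff 0%MM) h.
rewrite mcoeffB mcoeff1 /xvar mcoeffX eqxx mcoeff0.
by rewrite mnm1_eq0.
Qed.

Lemma xiS2 m : xi m.+1 = xvar * hP * xi m + fP ^+ m.+1.
Proof.
apply: (mulfI onemx_neq0); rewrite (key1 m.+1) (exprS fP m.+1) (exprS xvar m) (exprS hP m.+1) /fP /hP.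
apply: g_xiS2; exact: key1.
Qed.


Lemma U00 : mnm1 i0 i0 = 1%N. Proof. by rewrite mnm1E. Qed.
Lemma U01 : mnm1 i0 i1 = 0%N. Proof. by rewrite mnm1E. Qed.
Lemma U10 : mnm1 i1 i0 = 0%N. Proof. by rewrite mnm1E. Qed.
Lemma U11 : mnm1 i1 i1 = 1%N. Proof. by rewrite mnm1E. Qed.
Definition mnmS := (@mnmDE 2, @mnm0E 2, @mulmnE 2, U00, U01, U10, U11).

Lemma supp_inT {R : nzRingType} (p : {mpoly R[2]}) : supp_in (fun _ => True) p.
Proof. by []. Qed.

Lemma supp_in_sign {R : nzRingType} S k (p : {mpoly R[2]}) :
  supp_in S p -> supp_in S ((-1) ^+ k * p).
Proof.
move=> h; rewrite -signr_odd; case: (odd k); rewrite ?expr1 ?expr0 ?mulN1r ?mul1r //.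
exact: supp_inN.
Qed.

Lemma mcoeff_sign {R : nzRingType} k (p : {mpoly R[2]}) mm :
  ((-1) ^+ k * p)@_mm = (-1) ^+ k * p@_mm.
Proof.
elim: k => [|k IH]; first by rewrite expr0 !mul1r.
by rewrite !exprS -!mulrA !mulN1r mcoeffN IH.
Qed.

Lemma supp_x {R : nzRingType} : supp_in (fun mm => mm i0 = 1%N /\ mm i1 = 0%N) (xvar : {mpoly R[2]}).
Proof. by apply: supp_inX; rewrite !mnmS. Qed.
Lemma supp_y {R : nzRingType} : supp_in (fun mm => mm i0 = 0%N /\ mm i1 = 1%N) (yvar : {mpoly R[2]}).
Proof. by apply: supp_inX; rewrite !mnmS. Qed.

Lemma supp_xn {R : nzRingType} k :
  supp_in (fun mm => mm i0 = k /\ mm i1 = 0%N) (xvar ^+ k : {mpoly R[2]}).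
Proof.
apply: (supp_in_exp (S := fun j mm => mm i0 = j /\ mm i1 = 0%N) supp_x); first by rewrite !mnmS.
move=> j a b /= [h1 h2] [h3 h4]; rewrite !mnmS; lia.
Qed.

Lemma supp_yn {R : nzRingType} k :
  supp_in (fun mm => mm i0 = 0%N /\ mm i1 = k) (yvar ^+ k : {mpoly R[2]}).
Proof.
apply: (supp_in_exp (S := fun j mm => mm i0 = 0%N /\ mm i1 = j) supp_y); first by rewrite !mnmS.
move=> j a b /= [h1 h2] [h3 h4]; rewrite !mnmS; lia.
Qed.

Lemma supp_Nyn {R : nzRingType} k :
  supp_in (fun mm => mm i0 = 0%N /\ mm i1 = k) ((- yvar) ^+ k : {mpoly R[2]}).
Proof. rewrite exprNn; apply: supp_in_sign; exact: supp_yn. Qed.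

Definition Dp (m : nat) : {mpoly int[2]} := hP ^+ m.+1 - (- yvar) ^+ m.+1.

Lemma g_D (R : comRingType) (y H N : R) : (1 - y) * H - (- y) * N = (1 - y) * (H - N) + N.
Proof. ring. Qed.

Lemma DpS m : Dp m.+1 = hP * Dp m + (- yvar) ^+ m.+1.
Proof.
rewrite /Dp (exprS hP m.+1) (exprS (- yvar) m.+1) /hP.
move: (_ ^+ m.+1) (_ ^+ m.+1) => H N.
exact: g_D.
Qed.

Lemma supp_h : supp_in (fun mm => mm i0 = 0%N /\ (mm i1 <= 1)%N) hP.
Proof.
apply: supp_inB; first by apply: supp_in1; rewrite !mnmS.
by apply: supp_inX; rewrite !mnmS.
Qed.

Lemma supp_D m : supp_in (fun mm => mm i0 = 0%N /\ (mm i1 <= m)%N) (Dp m).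
Proof.
elim: m => [|m IH].
  rewrite /Dp !expr1 /hP opprK subrK; by apply: supp_in1; rewrite !mnmS.
rewrite DpS; apply: supp_inD.
  apply: (supp_inM supp_h IH) => a b /= [h1 h2] [h3 h4]; rewrite !mnmS; lia.
apply: supp_inW (supp_Nyn _) => mm /= [h1 h2]; lia.
Qed.

Lemma D0 m : (Dp m)@_0%MM = 1.
Proof.
elim: m => [|m IH].
  by rewrite /Dp !expr1 /hP opprK subrK mcoeff1 eqxx.
have e1 : (yvar * Dp m)@_0%MM = 0.
  apply: (supp_in_coef (S := fun mm => (1 <= mm i1)%N)); last by rewrite /= !mnmS.
  apply: (supp_inM supp_y (supp_inT _)) => a b /= [h1 h2] _; rewrite !mnmS; lia.
have e2 : ((- yvar) ^+ m.+1 : {mpoly int[2]})@_0%MM = 0.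
  apply: (supp_in_coef (S := fun mm => (1 <= mm i1)%N)); last by rewrite /= !mnmS.
  by apply: supp_inW (supp_Nyn _) => mm /= [h1 ->].
by rewrite DpS /hP mulrBl mul1r mcoeffD mcoeffB IH e1 e2 subr0 addr0.
Qed.

Definition Icond (m : nat) (mm : 'X_{1..2}) :=
  [/\ (1 <= m)%N, (mm i1 <= mm i0)%N, (mm i0 <= m)%N &
      (m.+1 * mm i0 + m.+1 <= mm i1 + m * m.+1)%N].

Lemma supp_f : supp_in (fun mm => mm i0 = mm i1 /\ (mm i1 <= 1)%N) fP.
Proof.
apply: supp_inB; first by apply: supp_in1; rewrite !mnmS.
apply: (supp_inM supp_x supp_y) => a b /= [h1 h2] [h3 h4]; rewrite !mnmS; lia.
Qed.

Lemma supp_Rs m : supp_in (Icond m) (Rs m).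
Proof.
elim: m => [|m IH]; first exact: supp_in0.
rewrite RsS; apply: supp_inD.
  apply: (supp_inM supp_f IH) => a b /= [h1 h2] [h3 h4 h5 h6]; split; rewrite ?mnmS; nia.
apply: (supp_inM (supp_xn m) (supp_D m)) => a b /= [h1 h2] [h3 h4]; split; rewrite ?mnmS; nia.
Qed.

Lemma xiE m : xi m = Rs m + (-1) ^+ m * 'X_[Pm2 m].
Proof. by rewrite /xi -mulrA /xvar /yvar !mpolyXn -mpolyXD. Qed.

Definition Tfull (m : nat) (mm : 'X_{1..2}) :=
  [/\ (mm i0 <= m)%N, (m * mm i1 <= m.+1 * mm i0)%N &
      (m.+1 * mm i0 + m.+1 <= mm i1 + m * m.+1)%N].

Lemma supp_xi m : (1 <= m)%N -> supp_in (Tfull m) (xi m).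
Proof.
move=> hm; rewrite xiE; apply: supp_inD.
  by apply: supp_inW (supp_Rs m) => mm [h1 h2 h3 h4]; split; nia.
apply: supp_in_sign; apply: supp_inX; rewrite /Tfull Pm2_0 Pm2_1; split; nia.
Qed.

Lemma fPc (p : {mpoly int[2]}) (mm : 'X_{1..2}) : mm i1 = 0%N -> (fP * p)@_mm = p@_mm.
Proof.
move=> h.
have e1 : (xvar * yvar * p)@_mm = 0.
  apply: (supp_in_coef (S := fun mm => (1 <= mm i1)%N)); last by rewrite /= h.
  have hxy : supp_in (fun mm => (1 <= mm i1)%N) (xvar * yvar : {mpoly int[2]}).
    apply: (supp_inM supp_x supp_y) => a b /= [h1 h2] [h3 h4]; rewrite !mnmS; lia.
  apply: (supp_inM hxy (supp_inT _)) => a b /= hb _; rewrite !mnmS; lia.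
by rewrite /fP mulrBl mul1r mcoeffB e1 subr0.
Qed.

Lemma XDc m k : (xvar ^+ m * Dp m)@_(mnm1 i0 *+ m + k)%MM = (Dp m)@_k.
Proof. by rewrite mulrC /xvar mpolyXn mcoeffMX. Qed.

Lemma XD0 m : (1 <= m)%N -> (xvar ^+ m * Dp m)@_0%MM = 0.
Proof.
move=> hm; apply: (supp_in_coef (S := fun mm => (1 <= mm i0)%N)); last by rewrite /= !mnmS.
apply: (supp_inM (supp_xn m) (supp_inT _)) => a b /= [h1 h2] _; rewrite !mnmS; lia.
Qed.

Lemma Rs0c m : (Rs m.+1)@_0%MM = 1.
Proof.
elim: m => [|m IH].
  rewrite RsS mcoeffD fPc ?mnmS // Rs0 mcoeff0 add0r.
  by rewrite -{1}(@mulm0n 2 (mnm1 i0)) -{1}(addm0 (mnm1 i0 *+ 0)%MM) XDc D0.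
by rewrite RsS mcoeffD fPc ?mnmS // IH XD0 // addr0.
Qed.

Lemma RsUc m : (Rs m.+1)@_(mnm1 i0 *+ m)%MM = 1.
Proof.
rewrite RsS mcoeffD fPc ?mnmS ?muln0 //.
rewrite -{2}(addm0 (mnm1 i0 *+ m)%MM) XDc D0.
rewrite (supp_in_coef (supp_Rs m)) ?add0r // => -[h1 h2 h3]; rewrite !mnmS; nia.
Qed.

Lemma xic m (k : 'X_{1..2}) : (xi m)@_k = (Rs m)@_k + (-1) ^+ m * (Pm2 m == k)%:R.
Proof. by rewrite xiE mcoeffD mcoeff_sign mcoeffX. Qed.

Lemma Pm2_neq m (k : 'X_{1..2}) : k i1 = 0%N -> (Pm2 m == k) = false.
Proof. by move=> h; apply/negP => /eqP e; move: h; rewrite -e Pm2_1. Qed.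

Lemma xi0c m : (1 <= m)%N -> (xi m)@_0%MM = 1.
Proof.
case: m => [//|m] _; by rewrite xic Pm2_neq ?mnmS // mulr0 addr0 Rs0c.
Qed.

Lemma xiUc m : (1 <= m)%N -> (xi m)@_(mnm1 i0 *+ m.-1)%MM = 1.
Proof.
case: m => [//|m] _; by rewrite xic Pm2_neq ?mnmS ?muln0 // mulr0 addr0 RsUc.
Qed.

Lemma xiPc m : (xi m)@_(Pm2 m) = (-1) ^+ m.
Proof.
rewrite xic eqxx mulr1 (supp_in_coef (supp_Rs m)) ?add0r //.
by move=> -[h1 h2 h3 h4]; move: h2; rewrite Pm2_0 Pm2_1; lia.
Qed.


Lemma to_field_c (K : fieldType) (p : {mpoly int[2]}) mm :
  (to_field K p)@_mm = (p@_mm)%:~R.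
Proof. by rewrite /to_field mcoeff_map_mpoly. Qed.

Lemma irr_xi m (K : fieldType) : (1 <= m)%N -> irreducible_elt (to_field K (xi m)).
Proof.
move=> hm; apply: (@irr_main K m _ hm).
- move=> mm; rewrite mcoeff_msupp to_field_c => h.
  have : mm \in msupp (xi m).
    by rewrite mcoeff_msupp; apply: contraNneq h => ->.
  by move/(supp_xi _ hm) => [h1 h2 h3].
- by rewrite mcoeff_msupp to_field_c xi0c // oner_neq0.
- by rewrite mcoeff_msupp to_field_c xiPc rmorph_sign signr_eq0.
Qed.


Notation shf := (shift_at (1 : int) 1).

Lemma shD (p q : {mpoly int[2]}) : shf (p + q) = shf p + shf q.
Proof. by rewrite /shift_at rmorphD. Qed.
Lemma shB (p q : {mpoly int[2]}) : shf (p - q) = shf p - shf q.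
Proof. by rewrite /shift_at rmorphB. Qed.
Lemma shM (p q : {mpoly int[2]}) : shf (p * q) = shf p * shf q.
Proof. by rewrite /shift_at rmorphM. Qed.
Lemma shX (p : {mpoly int[2]}) k : shf (p ^+ k) = shf p ^+ k.
Proof. by rewrite /shift_at rmorphXn. Qed.
Lemma sh1 : shf 1 = 1.
Proof. by rewrite /shift_at rmorph1. Qed.

Lemma sig_x : shf xvar = xvar + 1.
Proof. by rewrite /shift_at /xvar comp_mpolyXU mpolyC1. Qed.
Lemma sig_y : shf yvar = yvar + 1.
Proof. by rewrite /shift_at /yvar comp_mpolyXU mpolyC1. Qed.

Lemma mdeg2 (mm : 'X_{1..2}) : mdeg mm = (mm i0 + mm i1)%N.
Proof.
rewrite mdegE !big_ord_recl big_ord0 addn0; congr (mm _ + mm _)%N; exact: val_inj.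
Qed.

Lemma g_F (R : comRingType) (x y : R) : 1 - (x + 1) * (y + 1) = - (x * (y + 1) + y).
Proof. ring. Qed.
Lemma g_h (R : comRingType) (y : R) : 1 - (y + 1) = - y.
Proof. ring. Qed.

Lemma sig_f : shf fP = - (xvar * (yvar + 1) + yvar).
Proof. by rewrite /fP shB sh1 shM sig_x sig_y g_F. Qed.
Lemma sig_h : shf hP = - yvar.
Proof. by rewrite /hP shB sh1 sig_y g_h. Qed.

Lemma sig_xiS m : shf (xi m.+1) =
  - (xvar * (yvar + 1) + yvar) * shf (xi m) + (xvar + 1) ^+ m * (- yvar) ^+ m.+1.
Proof. by rewrite xiS shD !shM !shX sig_f sig_x sig_h. Qed.

Lemma sig_xi0 : shf (xi 0) = yvar + 1.
Proof.
have -> : xi 0 = yvar by rewrite /xi Rs0 expr0 expr1 !mul1r add0r.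
exact: sig_y.
Qed.

Lemma V1 m : supp_in (fun mm => (m <= mm i0 + mm i1)%N) (shf (xi m)).
Proof.
elim: m => [|m IH]; first by apply: supp_inW (supp_inT _) => mm _.
rewrite sig_xiS; apply: supp_inD.
  have hF : supp_in (fun mm => (1 <= mm i0 + mm i1)%N)
      (- (xvar * (yvar + 1) + yvar) : {mpoly int[2]}).
    apply: supp_inN; apply: supp_inD.
      apply: (supp_inM supp_x (supp_inT _)) => a b /= [h1 h2] _; rewrite !mnmS; lia.
    by apply: supp_inW supp_y => mm /= [-> ->].
  apply: (supp_inM hF IH) => a b /= h1 h2; rewrite !mnmS; lia.
apply: (supp_inM (supp_inT _) (supp_Nyn _)) => a b /= _ [h1 h2]; rewrite !mnmS; lia.
Qed.

Lemma xplus1_exp m : exists G : {mpoly int[2]}, (xvar + 1) ^+ m = 1 + xvar * G.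
Proof.
elim: m => [|m [G IH]]; first by exists 0; rewrite expr0 mulr0 addr0.
exists ((xvar + 1) * G + 1); rewrite exprS IH.
move: (xvar : {mpoly int[2]}) => x; ring.
Qed.

Lemma g_V2 (R : comRingType) (x y s G : R) (m : nat) :
  - (x * (y + 1) + y) * s + (1 + x * G) * (- y) ^+ m.+1 =
  - (s * y) + (- y) ^+ m.+1 + x * (- (y + 1) * s + G * (- y) ^+ m.+1).
Proof. move: ((- y) ^+ m.+1) => N; ring. Qed.

Lemma V2 m : (shf (xi m))@_(mnm1 i1 *+ m)%MM = (-1) ^+ m * (m.+1)%:R.
Proof.
elim: m => [|m IH].
  by rewrite sig_xi0 mulm0n mcoeffD mcoeff1 eqxx /yvar mcoeffX mnm1_eq0 add0r expr0 mul1r.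
have [G eG] := xplus1_exp m.
rewrite sig_xiS eG g_V2 !mcoeffD mcoeffN.
have e1 : (xvar * (- (yvar + 1) * shf (xi m) + G * (- yvar) ^+ m.+1))@_(mnm1 i1 *+ m.+1)%MM = 0.
  apply: (supp_in_coef (S := fun mm => (1 <= mm i0)%N)); last by rewrite /= !mnmS.
  apply: (supp_inM supp_x (supp_inT _)) => a b /= [h1 h2] _; rewrite !mnmS; lia.
rewrite e1 addr0 mulmS /yvar mcoeffMX IH (exprNn 'X_i1) mcoeff_sign mpolyXn -mulmS mcoeffX eqxx mulr1.
rewrite -[(m.+2)%:R]natr1 !exprS; move: ((-1) ^+ m) ((m.+1)%:R) => e a; ring.
Qed.

Lemma vanish_xi m : vanishes_to_order (xi m) 1 1 m.
Proof.
split.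
  by move=> mm /(V1 m); rewrite mdeg2.
exists (mnm1 i1 *+ m)%MM; last by rewrite mdeg2 !mnmS; lia.
rewrite mcoeff_msupp V2 mulf_neq0 ?signr_eq0 //.
by rewrite pnatr_eq0.
Qed.


Lemma lin_conv (S : seq (rat * rat)) p (al be ga : rat) : in_conv S p ->
  (forall s, s \in S -> al * s.1 + be * s.2 <= ga) -> al * p.1 + be * p.2 <= ga.
Proof.
move=> [lam [h0 [h1 [e1 e2]]]] hS.
rewrite e1 e2 !mulr_sumr -big_split /=.
apply: (@le_trans _ _ (\sum_i lam i * ga)).
  apply: ler_sum => i _; rewrite mulrCA (mulrCA be) -mulrDr; apply: ler_wpM2l => //.
  apply: hS; exact: mem_nth.
by rewrite -mulr_suml h1 mul1r.
Qed.

Lemma sum_ind n (k : 'I_n) (F : 'I_n -> rat) : \sum_j (k == j)%:R * F j = F k.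
Proof.
rewrite (bigD1 k) //= eqxx mul1r big1 ?addr0 // => j hj.
by rewrite eq_sym (negbTE hj) mul0r.
Qed.

Lemma conv_sub (T S : seq (rat * rat)) p : in_conv T p ->
  (forall t, t \in T -> t \in S) -> in_conv S p.
Proof.
move=> [lam [h0 [h1 [e1 e2]]]] hTS.
case: S hTS => [|s0 S'] hTS.
  case: T lam h0 h1 e1 e2 hTS => [|t T'] lam h0 h1 e1 e2 hTS.
    by move: h1; rewrite big_ord0 => /eqP; rewrite eq_sym oner_eq0.
  by have := hTS t; rewrite inE eqxx => /(_ isT).
set S := s0 :: S'.
pose f (i : 'I_(size T)) : 'I_(size S) := inord (index (nth (0,0) T i) S).
have hf i : nth (0,0) S (f i) = nth (0,0) T i.
  rewrite inordK; first by apply: nth_index; apply: hTS; exact: mem_nth.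
  by rewrite index_mem; apply: hTS; exact: mem_nth.
pose lam' (j : 'I_(size S)) := \sum_i (f i == j)%:R * lam i.
have key (c : 'I_(size S) -> rat) : \sum_j lam' j * c j = \sum_i lam i * c (f i).
  rewrite /lam'; under eq_bigr => j _ do rewrite mulr_suml.
  rewrite exchange_big /=; apply: eq_bigr => i _.
  under eq_bigr => j _ do rewrite -mulrA.
  by rewrite sum_ind.
exists lam'; split.
  by move=> j; apply: sumr_ge0 => i _; apply: mulr_ge0 => //; rewrite ler0n.
split.
  have := key (fun _ => 1); rewrite /=.
  under eq_bigr => j _ do rewrite mulr1.
  by move=> ->; under eq_bigr => i _ do rewrite mulr1.
split.
  by rewrite key e1; apply: eq_bigr => i _; rewrite hf.
by rewrite key e2; apply: eq_bigr => i _; rewrite hf.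
Qed.


Lemma conv3 (v0 v1 v2 : rat * rat) (l0 l1 l2 : rat) p :
  0 <= l0 -> 0 <= l1 -> 0 <= l2 -> l0 + l1 + l2 = 1 ->
  p.1 = l0 * v0.1 + l1 * v1.1 + l2 * v2.1 ->
  p.2 = l0 * v0.2 + l1 * v1.2 + l2 * v2.2 ->
  in_conv [:: v0; v1; v2] p.
Proof.
move=> h0 h1 h2 hs e1 e2.
exists (fun i : 'I_3 => nth 0 [:: l0; l1; l2] i); split.
  by case=> [[|[|[|//]]] hi].
rewrite !big_ord_recl big_ord0 /= !addr0 !addrA.
by rewrite !big_ord0 !addr0; split; [|split].
Qed.

Lemma bary (m : nat) (a b : rat) : (1 <= m)%N -> 0 <= b -> a <= m%:R ->
  m%:R * b <= (m%:R + 1) * a ->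
  (m%:R + 1) * a + (m%:R + 1) <= b + m%:R * (m%:R + 1) ->
  in_conv [:: (0, 0); (m%:R - 1, 0); (m%:R, m.+1%:R)] (a, b).
Proof.
rewrite -natr1.
case: m => [//|[|k]] _ hb ha h3 h4.
  have eb : b = 2 * a by move: h3 h4; rewrite mul1r; lra.
  apply: (@conv3 _ _ _ (1 - a) 0 a) => /=; try lra.
set M := (k.+2)%:R : rat.
have M1 : 0 < M - 1 by rewrite /M -natr1 addrK ltr0n.
have M2 : 0 < M + 1 by lra.
have MD : 0 < (M + 1) * (M - 1) by rewrite mulr_gt0.
apply: (@conv3 _ _ _ (((M + 1) * (M - 1) - (M + 1) * a + b) / ((M + 1) * (M - 1)))
              (((M + 1) * a - M * b) / ((M + 1) * (M - 1)))
              (b / (M + 1))) => /=.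
- apply: divr_ge0; last exact: ltW.
  lra.
- apply: divr_ge0; last exact: ltW.
  lra.
- by apply: divr_ge0; last exact: ltW.
- field; lra.
- field; lra.
- field; lra.
Qed.


Lemma newton_xi m : (1 <= m)%N -> forall pt : rat * rat,
  newton_polygon (xi m) pt <->
  in_conv [:: (0, 0); (m%:R - 1, 0); (m%:R, m.+1%:R)] pt.
Proof.
move=> hm pt; split.
  move=> hN; have L al be ga := @lin_conv _ _ al be ga hN.
  have T s : s \in [seq expvec mm | mm <- msupp (xi m)] ->
      exists mm, [/\ s = expvec mm, (mm i0 <= m)%N, (m * mm i1 <= m.+1 * mm i0)%N &
                  (m.+1 * mm i0 + m.+1 <= mm i1 + m * m.+1)%N].
    by move=> /mapP [mm /(supp_xi _ hm) [h1 h2 h3] ->]; exists mm.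
  have i1 : 0 * pt.1 + (-1) * pt.2 <= 0.
    apply: L => s /T [mm [-> _ _ _]]; rewrite /expvec /= mul0r add0r mulN1r oppr_le0.
    exact: ler0n.
  have i2 : 1 * pt.1 + 0 * pt.2 <= m%:R.
    apply: L => s /T [mm [-> h _ _]]; rewrite /expvec /= mul0r addr0 mul1r.
    by rewrite ler_nat.
  have i3 : (- (m%:R + 1)) * pt.1 + m%:R * pt.2 <= 0.
    apply: L => s /T [mm [-> _ h _]]; rewrite /expvec /= mulNr addrC subr_le0.
    by rewrite natr1 -!natrM ler_nat.
  have i4 : (m%:R + 1) * pt.1 + (-1) * pt.2 <= m%:R * (m%:R + 1) - (m%:R + 1).
    apply: L => s /T [mm [-> _ _ h]]; rewrite /expvec /= mulN1r.
    rewrite lerBrDr addrAC lerBlDr natr1 -!natrM -!natrD ler_nat.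
    lia.
  case: pt {hN L T} i1 i2 i3 i4 => a b /= i1 i2 i3 i4.
  apply: bary => //; lra.
move=> hT; apply: (@conv_sub _ _ _ hT) => t; rewrite !inE => /or3P [] /eqP ->; apply/mapP.
- exists 0%MM; first by rewrite mcoeff_msupp xi0c // oner_eq0.
  by rewrite /expvec !mnm0E.
- exists (mnm1 i0 *+ m.-1)%MM; first by rewrite mcoeff_msupp xiUc // oner_eq0.
  rewrite /expvec !mnmS ?muln0 ?mul0n ?muln1 ?mul1n; congr (_, _).
  by rewrite -subn1 natrB.
- exists (Pm2 m); first by rewrite mcoeff_msupp xiPc signr_eq0.
  by rewrite /expvec Pm2_0 Pm2_1.
Qed.


Theorem proposition3p1 :
  let f : {mpoly int[2]} := 1 - xvar * yvar in
  let g : {mpoly int[2]} := 1 - xvar * yvar ^+ 2 in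
  let h : {mpoly int[2]} := 1 - yvar in
  exists xi : nat -> {mpoly int[2]},
    [/\ xi 1%N = g,
        (forall m : nat, (1 <= m)%N ->
           xi m.+1 = f * xi m + xvar ^+ m * h ^+ m.+1) /\
        (forall m : nat, (1 <= m)%N ->
           xi m.+1 = xvar * h * xi m + f ^+ m.+1),
        (forall m : nat, (1 <= m)%N -> vanishes_to_order (xi m) 1 1 m),
        (forall m : nat, (1 <= m)%N -> forall pt : rat * rat,
           newton_polygon (xi m) pt <->
           in_conv [:: (0, 0); (m%:R - 1, 0); (m%:R, m.+1%:R)] pt)
      & (forall m : nat, (1 <= m)%N -> forall K : fieldType,
           irreducible_elt (to_field K (xi m)))].
Proof.
move=> f g h; exists xi; split.
- exact: xi1.
- by split => m _; [exact: xiS | exact: xiS2].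
- move=> m _; exact: vanish_xi.
- move=> m hm pt; exact: newton_xi.
- move=> m hm K; exact: irr_xi.
Qed.
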